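(* Consider a single consensus instance with identifier $\mathsf{swid}$ run by a set of authorities satisfying the standing assumptions below. Let $P_1$ and $P_2$ be proposals for $\mathsf{swid}$ such that a commit certificate $C^* = \mathsf{cert}[\mathsf{Commit}(P_1)]$ and a pre-commit certificate $C_2 = \mathsf{cert}[\mathsf{PreCommit}(P_2)]$ both exist, and suppose $\mathsf{round}(P_2) \ge \mathsf{round}(P_1)$. Then $\mathsf{decision}(P_1) = \mathsf{decision}(P_2)$.
   Context: Setting. There is a fixed finite set of authorities, some of which are honest and the rest arbitrary (Byzantine). A \emph{quorum} is a set of authorities of a fixed size (e.g. $2f+1$ out of $n=3f+1$ with at most $f$ dishonest), such that any two quorums intersect in at least one honest authority. For a message $M$, a \emph{certificate} $\mathsf{cert}[M]$ exists only if every authority of some quorum has signed (voted for) $M$. Data. A decision value is either $\mathsf{Confirm}$ or $\mathsf{Abort}$. A \emph{proposal} is a message $P = \mathsf{Proposal}(\mathsf{swid}, k, V)$ with round number $k \in \mathbb{N}$ and decision value $V$; write $\mathsf{round}(P)=k$, $\mathsf{decision}(P)=V$. A \emph{pre-commit certificate} is $C=\mathsf{cert}[\mathsf{PreCommit}(P)]$ and a \emph{commit certificate} is $C^*=\mathsf{cert}[\mathsf{Commit}(P)]$; $\mathsf{round}$ and $\mathsf{decision}$ of such certificates are those of $P$. Honest behavior. Each honest authority $\alpha$ keeps, for the instance $\mathsf{swid}$, two fields $\mathsf{proposed}(\alpha)$ (initially $\bot$, later a proposal) and $\mathsf{locked}(\alpha)$ (initially $\bot$, later a pre-commit certificate), which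 change only as follows. (i) $\alpha$ signs $\mathsf{PreCommit}(P)$ only if at that moment $P$ is \emph{safe}: (a) if $\mathsf{proposed}(\alpha)=P_0\neq\bot$ and $P\ne P_0$ then $\mathsf{round}(P)>\mathsf{round}(P_0)$; and (b) if $\mathsf{locked}(\alpha)=C_0\neq\bot$ then $\mathsf{round}(P)>\mathsf{round}(C_0)$ and $\mathsf{decision}(P)=\mathsf{decision}(C_0)$; upon signing it sets $\mathsf{proposed}(\alpha):=P$. (ii) $\alpha$ signs $\mathsf{Commit}(P)$ only upon receiving a valid pre-commit certificate $C=\mathsf{cert}[\mathsf{PreCommit}(P)]$ that is \emph{safe} at that moment: (c) if $\mathsf{proposed}(\alpha)=P_0\neq\bot$ then $\mathsf{round}(C)\ge\mathsf{round}(P_0)$; and (d) if $\mathsf{locked}(\alpha)=C_0\neq\bot$ then $\mathsf{round}(C)\ge\mathsf{round}(C_0)$; upon signing it sets $\mathsf{locked}(\alpha):=C$. *)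

(* Defs.v *)
From mathcomp Require Import all_boot.
From Stdlib Require List.
Set Implicit Arguments. Unset Strict Implicit. Unset Printing Implicit Defensive.

Inductive dvalue := Confirm | Abort.

Record proposal := Proposal { swid : nat; round : nat; decision : dvalue }.

Inductive msg := PreCommit of proposal | Commit of proposal.

Section Protocol.
Variable A : finType.

(* An execution is the chronological list of signatures (signer, message).
   Signatures are unforgeable: (a, m) occurs iff authority a signed m. *)
Definition trace := seq (A * msg).

Definition signed (tr : trace) (a : A) (m : msg) : Prop := List.In (a, m) tr.

Definition cert_exists (quorum : {set A} -> Prop) (tr : trace) (m : msg) : Prop :=
  exists Q : {set A}, quorum Q /\ forall a, a \in Q -> signed tr a m.

Definition quorum_intersection (honest : A -> Prop) (quorum : {set A} -> Prop) : Prop :=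
  forall Q1 Q2, quorum Q1 -> quorum Q2 ->
    exists a, a \in Q1 /\ a \in Q2 /\ honest a.

(* Local state of authority a for instance s after a trace.
   proposed(a): the last proposal P for which a signed PreCommit(P).
   locked(a): the last pre-commit certificate C = cert[PreCommit P] upon which
   a signed Commit(P); it is represented by P (round/decision of C are those of P). *)
Definition step_proposed (a : A) (s : nat) (o : option proposal) (e : A * msg) :=
  match e with
  | (b, PreCommit P) => if (b == a) && (swid P == s) then Some P else o
  | _ => o
  end.

Definition step_locked (a : A) (s : nat) (o : option proposal) (e : A * msg) :=
  match e with
  | (b, Commit P) => if (b == a) && (swid P == s) then Some P else o
  | _ => o
  end.

Definition proposed (tr : trace) (a : A) (s : nat) : option proposal :=
  foldl (step_proposed a s) None tr.

Definition locked (tr : trace) (a : A) (s : nat) : option proposal :=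
  foldl (step_locked a s) None tr.

Definition safe_precommit (pre : trace) (a : A) (P : proposal) : Prop :=
  (forall P0, proposed pre a (swid P) = Some P0 -> P <> P0 -> round P0 < round P) /\
  (forall C0, locked pre a (swid P) = Some C0 ->
      round C0 < round P /\ decision P = decision C0).

(* Rule (ii): a valid certificate cert[PreCommit P] has been received
   (it exists in the history) and is safe. *)
Definition safe_commit (quorum : {set A} -> Prop) (pre : trace) (a : A)
    (P : proposal) : Prop :=
  cert_exists quorum pre (PreCommit P) /\
  (forall P0, proposed pre a (swid P) = Some P0 -> round P0 <= round P) /\
  (forall C0, locked pre a (swid P) = Some C0 -> round C0 <= round P).

Definition honest_step (quorum : {set A} -> Prop) (pre : trace) (a : A) (m : msg) : Prop :=
  match m with
  | PreCommit P => safe_precommit pre a P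
  | Commit P => safe_commit quorum pre a P
  end.

(* Valid execution: every signature by an honest authority obeys the rules
   w.r.t. the history before it; Byzantine authorities sign arbitrarily. *)
Definition valid_trace (honest : A -> Prop) (quorum : {set A} -> Prop) (tr : trace) : Prop :=
  forall i (a : A) (m : msg), List.nth_error tr i = Some (a, m) -> honest a ->
    honest_step quorum (take i tr) a m.

End Protocol.

(* Main.v *)
Require Import Defs.
From mathcomp Require Import all_boot.
From Stdlib Require List.
From mathcomp Require Import zify.
From Stdlib Require Classical_Prop.
Set Implicit Arguments. Unset Strict Implicit.

Lemma take_nth_rcons (T : Type) (tr : seq T) k e :
  List.nth_error tr k = Some e -> take k.+1 tr = rcons (take k tr) e.
Proof.
elim: tr k => [|x tr IH] [|k] //=.
- by case=> <-; rewrite take0.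
- by move=> /IH /= ->.
Qed.

Lemma nth_lt (T : Type) (tr : seq T) k : k < size tr -> exists e, List.nth_error tr k = Some e.
Proof.
elim: tr k => [|x tr IH] [|k] //=; first by exists x.
by move=> /IH.
Qed.

Lemma nth_size (T : Type) (tr : seq T) k e : List.nth_error tr k = Some e -> k < size tr.
Proof. elim: tr k => [|x tr IH] [|k] //=; by move=> /IH. Qed.

Lemma In_take (T : Type) (tr : seq T) k x : List.In x (take k tr) -> List.In x tr.
Proof.
elim: tr k => [|y tr IH] [|k] //= [->|H]; [by left| by right; apply: (IH k)].
Qed.

Lemma mono_gen (N : nat) (f : nat -> option proposal)
  (R : option proposal -> option proposal -> Prop) :
  (forall x, R x x) -> (forall x y z, R x y -> R y z -> R x z) ->
  forall i, (forall k, i <= k -> k < N -> R (f k) (f k.+1)) ->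
  forall j, i <= j -> j <= N -> R (f i) (f j).
Proof.
move=> Hr Ht i Hs; elim=> [|j IH] Hij HjN.
- by have -> : i = 0 by lia.
- case: (ltngtP i j.+1) => H.
  + apply: (Ht _ (f j)); first by apply: IH; lia.
    apply: Hs; lia.
  + lia.
  + by rewrite H.
Qed.

Definition Ropt (o o' : option proposal) : Prop :=
  match o, o' with
  | None, _ => True
  | Some _, None => False
  | Some P, Some P' => P = P' \/ round P < round P'
  end.

Definition Lopt (o o' : option proposal) : Prop :=
  match o, o' with
  | None, _ => True
  | Some _, None => False
  | Some P, Some P' => round P <= round P'
  end.

Section S.
Variables (A : finType) (honest : A -> Prop) (quorum : {set A} -> Prop)
  (tr : trace A) (Hvalid : valid_trace honest quorum tr).

Lemma prop_mono a s i j : honest a -> i <= j -> j <= size tr ->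
  Ropt (proposed (take i tr) a s) (proposed (take j tr) a s).
Proof.
move=> Ha; apply: (mono_gen (f := fun k => proposed (take k tr) a s)).
- by case=> //= P; left.
- case=> [x|] [y|] [z|] //= H1 H2; case: H1 => [->//|H1]; right; case: H2 => [<-//|]; lia.
- move=> k _ Hk; case: (nth_lt Hk) => [[b m] He].
  rewrite (take_nth_rcons He) /proposed foldl_rcons -/(proposed _ _ _).
  have Hv := Hvalid He.
  case: m He Hv => P He Hv /=;
    case E: (proposed (take k tr) a s) => [P0|] //=; try by left.
  case: eqP => [Hb|_] /=; last by left.
  case: eqP => [Hsw|_] /=; last by left.
  subst b s; case: (Hv Ha) => H1 _.
  case: (Classical_Prop.classic (P0 = P)) => [->|Hne]; first by left.
  right; apply: (H1 P0) => // E'; apply: Hne; by rewrite E'.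
Qed.

Lemma lock_mono a s i j : honest a -> i <= j -> j <= size tr ->
  Lopt (Defs.locked (take i tr) a s) (Defs.locked (take j tr) a s).
Proof.
move=> Ha; apply: (mono_gen (f := fun k => Defs.locked (take k tr) a s)).
- by case=> [P|] /=.
- case=> [x|] [y|] [z|] //= H1 H2; lia.
- move=> k _ Hk; case: (nth_lt Hk) => [[b m] He].
  rewrite (take_nth_rcons He) /Defs.locked foldl_rcons -/(Defs.locked _ _ _).
  have Hv := Hvalid He.
  case: m He Hv => P He Hv /=;
    case E: (Defs.locked (take k tr) a s) => [P0|] //=.
  case: eqP => [Hb|_] /=; last by [].
  case: eqP => [Hsw|_] /=; last by [].
  subst b s; case: (Hv Ha) => _ [_ H3].
  by apply: H3.
Qed.

Lemma lock_inv a s k C : honest a -> k <= size tr ->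
  Defs.locked (take k tr) a s = Some C -> swid C = s /\ cert_exists quorum tr (PreCommit C).
Proof.
move=> Ha; elim: k => [|k IH] Hk; first by rewrite take0.
have [[b m] He] := nth_lt (tr:=tr) (k:=k) Hk.
rewrite (take_nth_rcons He) /Defs.locked foldl_rcons -/(Defs.locked _ _ _).
have Hv := Hvalid He.
case: m He Hv => P He Hv /=; first by apply: IH; lia.
case: eqP => [Hb|_] /=; last by apply: IH; lia.
case: eqP => [Hsw|_] /=; last by apply: IH; lia.
case=> <-; subst b; split => //.
case: (Hv Ha) => [[Q [HQ HQs]] _]; exists Q; split => // x Hx.
exact: In_take (HQs x Hx).
Qed.

Lemma prop_after a P j : honest a -> List.nth_error tr j = Some (a, PreCommit P) ->
  proposed (take j.+1 tr) a (swid P) = Some P.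
Proof.
move=> _ He; rewrite (take_nth_rcons He) /proposed foldl_rcons /=.
by rewrite !eqxx.
Qed.

Lemma lock_after a P j : honest a -> List.nth_error tr j = Some (a, Commit P) ->
  Defs.locked (take j.+1 tr) a (swid P) = Some P.
Proof.
move=> _ He; rewrite (take_nth_rcons He) /Defs.locked foldl_rcons /=.
by rewrite !eqxx.
Qed.

Lemma same_round_lt b P P' i j : honest b -> i < j ->
  List.nth_error tr i = Some (b, PreCommit P) -> List.nth_error tr j = Some (b, PreCommit P') ->
  swid P = swid P' -> round P = round P' -> P = P'.
Proof.
move=> Hb Hij Hi Hj Hs Hr.
have H1 := prop_after Hb Hi.
have Hjs := nth_size Hj.
have := prop_mono (swid P) Hb (i:=i.+1) (j:=j) Hij (ltnW Hjs).
rewrite H1 /=.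
case E: (proposed (take j tr) b (swid P)) => [P0|] //= HR.
case: (Hvalid Hj Hb) => Hs1 _.
rewrite -Hs in Hs1.
case: (Classical_Prop.classic (P' = P0)) => [EP|NE].
- subst P0; case: HR => // ?; lia.
- have := Hs1 P0 E NE.
  case: HR => [<-|]; lia.
Qed.

Lemma same_round b P P' i j : honest b ->
  List.nth_error tr i = Some (b, PreCommit P) -> List.nth_error tr j = Some (b, PreCommit P') ->
  swid P = swid P' -> round P = round P' -> P = P'.
Proof.
move=> Hb Hi Hj Hs Hr.
case: (ltngtP i j) => H.
- exact: (same_round_lt Hb H Hi Hj).
- by symmetry; apply: (same_round_lt Hb H Hj Hi).
- by subst; rewrite Hi in Hj; case: Hj.
Qed.

End S.

Theorem mainTheorem1 (A : finType) (honest : A -> Prop) (quorum : {set A} -> Prop)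
  (Hq : quorum_intersection honest quorum)
  (tr : trace A) (Hvalid : valid_trace honest quorum tr)
  (P1 P2 : proposal) (Hs : swid P1 = swid P2)
  (HC1 : cert_exists quorum tr (Commit P1))
  (HC2 : cert_exists quorum tr (PreCommit P2))
  (Hr : round P1 <= round P2) :
  decision P1 = decision P2.
Proof.
suff aux : forall n P2, round P2 < n -> swid P1 = swid P2 ->
  cert_exists quorum tr (PreCommit P2) -> round P1 <= round P2 ->
  decision P1 = decision P2 by exact: (aux (round P2).+1).
case: HC1 => Q1 [HQ1 HQ1s].
clear Hs HC2 Hr P2.
elim=> [|n IH] P2 Hn Hs [Q2 [HQ2 HQ2s]] Hr; first by [].
have [a [Ha1 [Ha2 Ha]]] := Hq _ _ HQ1 HQ2.
have [i Hi] := List.In_nth_error _ _ (HQ1s a Ha1).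
have [j Hj] := List.In_nth_error _ _ (HQ2s a Ha2).
case: (ltngtP (round P1) (round P2)) => Hrr; last first.
-
  case: (Hvalid _ _ _ Hi Ha) => [[Q3 [HQ3 HQ3s]] _].
  have [b [Hb3 [Hb2 Hb]]] := Hq _ _ HQ3 HQ2.
  have [i' Hi'] := List.In_nth_error _ _ (In_take (HQ3s b Hb3)).
  have [j' Hj'] := List.In_nth_error _ _ (HQ2s b Hb2).
  by rewrite (same_round Hvalid Hb Hi' Hj' Hs Hrr).
- lia.
- case: (ltngtP i j) => Hij; last first.
  + by subst; rewrite Hi in Hj.
  +
    have H1 := prop_after Ha Hj.
    have := prop_mono Hvalid (swid P2) Ha (i:=j.+1) (j:=i) Hij (ltnW (nth_size Hi)).
    rewrite H1 -Hs /=.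
    case E: (proposed (take i tr) a (swid P1)) => [P0|] //= HR.
    case: (Hvalid _ _ _ Hi Ha) => _ [H2 _].
    have := H2 P0 E; case: HR => [<-|]; lia.
  +
    have H1 := lock_after Ha Hi.
    have := lock_mono Hvalid (swid P1) Ha (i:=i.+1) (j:=j) Hij (ltnW (nth_size Hj)).
    rewrite H1 /=.
    case E: (Defs.locked (take j tr) a (swid P1)) => [C0|] //= HR.
    have [HsC HcC] := lock_inv Hvalid Ha (ltnW (nth_size Hj)) E.
    case: (Hvalid _ _ _ Hj Ha) => _ H3.
    rewrite -Hs in H3; have [Hlt ->] := H3 C0 E.
    apply: IH => //; lia.
Qed.
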